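(* Let $G=(V,D,B)$ be a mixed graph with $V=\{1,\dots,n\}$, and let $\Lambda=(\lambda_{uv})$ and $\Omega$ be the matrices of indeterminates associated with the directed and bidirected parts of $G$. Let $D_L,D_R\subset D$ and define $n\times n$ matrices $\Lambda^L,\Lambda^R$ by $\Lambda^L_{uv}=\lambda_{uv}$ if $(u,v)\in D_L$ and $0$ otherwise, and $\Lambda^R_{uv}=\lambda_{uv}$ if $(u,v)\in D_R$ and $0$ otherwise. Let $G^*_{\mathrm{flow}}=(V^*,D^* )$ be the directed graph with $V^*=\{1,\dots,n\}\cup\{1',\dots,n'\}$ and $D^*$ consisting of: $i\to j$ if $(j,i)\in D_L$; $i\to i'$ for all $i\in V$; $i\to j'$ if $(i,j)\in B$; $i'\to j'$ if $(i,j)\in D_R$; all edges and vertices have capacity $1$. Let $\Gamma=(I-\Lambda^L)^{-T}\Omega(I-\Lambda^R)^{-1}$. Then for any $S,T\subset V$ with $|S|=|T|=k$, if the maximum flow from $S$ to $T'=\{t':t\in T\}$ in $G^*_{\mathrm{flow}}$ is less than $k$, then $|\Gamma_{S,T}|=0$.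
   Context: A mixed graph $G=(V,D,B)$ has directed edges $D\subset V\times V$ and symmetric bidirected edges $B\subset V\times V$, without self-loops. The matrix of indeterminates $\Lambda$ has an indeterminate $\lambda_{uv}$ in position $(u,v)$ if $(u,v)\in D$ and $0$ otherwise; $\Omega$ is symmetric with indeterminate diagonal entries, an indeterminate $\omega_{uv}=\omega_{vu}$ if $(u,v)\in B$, and $0$ otherwise. Entries of $\Gamma$ are formal power series (rational functions) in these indeterminates, and $|\Gamma_{S,T}|=0$ means that the determinant of the submatrix with rows $S$ and columns $T$ is identically zero. Maximum flow allows multiple sources/sinks and vertex capacities. *)

(* Defs.v *)
From HB Require Import structures.
From mathcomp Require Import all_boot all_order all_algebra.
From mathcomp Require Import fraction.
From mathcomp Require Import mpoly.

Set Implicit Arguments.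
Unset Strict Implicit.
Unset Printing Implicit Defensive.

Import Order.TTheory GRing.Theory Num.Theory.
Local Open Scope ring_scope.

Section MixedGraph.
Variable n : nat.

(* Indeterminates: lambda_{uv} is indexed by inl (u,v), omega_{uv} by inr (u,v)
   with (u,v) normalised so that u <= v (hence omega_{uv} = omega_{vu}). *)
Definition var_t := (('I_n * 'I_n) + ('I_n * 'I_n))%type.
Definition nvar : nat := #|{: var_t}|.

Definition polyring := {mpoly int[nvar]}.
Definition ratfun := {fraction polyring}.

Definition indet (x : var_t) : ratfun := @FracField.tofrac polyring ('X_(enum_rank x) : polyring).

Definition lam (u v : 'I_n) : ratfun := indet (inl (u, v)).
Definition omega (u v : 'I_n) : ratfun :=
  indet (inr (if (u <= v)%N then (u, v) else (v, u))).

(* Lambda restricted to a set of directed edges E (E = D gives Lambda;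
   E = D_L gives Lambda^L; E = D_R gives Lambda^R). *)
Definition LambdaOn (E : {set 'I_n * 'I_n}) : 'M[ratfun]_n :=
  \matrix_(u, v) (if (u, v) \in E then lam u v else 0).

Definition Omega (B : {set 'I_n * 'I_n}) : 'M[ratfun]_n :=
  \matrix_(u, v) (if (u == v) || ((u, v) \in B) then omega u v else 0).

Definition Gamma (DL DR B : {set 'I_n * 'I_n}) : 'M[ratfun]_n :=
  (invmx (1%:M - LambdaOn DL))^T *m Omega B *m invmx (1%:M - LambdaOn DR).

(* |A_{S,T}|: determinant of the submatrix with rows S and columns T
   (in increasing order), when #|T| = #|S|. *)
Definition minor (R : comNzRingType) (A : 'M[R]_n) (S T : {set 'I_n})
    (h : #|T| = #|S|) : R :=
  \det (castmx (erefl #|S|, h)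
          (mxsub (fun i : 'I_#|S| => enum_val i) (fun j : 'I_#|T| => enum_val j) A)).

(* The flow graph G*_flow: vertices inl i = i, inr i = i'. *)
Definition vstar := ('I_n + 'I_n)%type.

Definition flow_edge (DL DR B : {set 'I_n * 'I_n}) (x y : vstar) : bool :=
  match x, y with
  | inl i, inl j => (j, i) \in DL
  | inl i, inr j => (i == j) || ((i, j) \in B)
  | inr i, inr j => (i, j) \in DR
  | inr _, inl _ => false
  end.

(* A flow from the source set Src to the sink set Snk in G*_flow with all
   edge and vertex capacities equal to 1 (multiple sources/sinks handled via
   a super-source injecting [inj x] >= 0 at sources and a super-sink
   extracting [ext x] >= 0 at sinks). *)
Definition is_flow (DL DR B : {set 'I_n * 'I_n}) (Src Snk : {set vstar})
    (f : vstar -> vstar -> rat) (inj ext : vstar -> rat) : Prop :=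
  (forall x y, 0 <= f x y) /\
  (forall x y, f x y <= 1) /\
  (forall x y, ~~ flow_edge DL DR B x y -> f x y = 0) /\
  (forall x, 0 <= inj x /\ (x \notin Src -> inj x = 0)) /\
  (forall x, 0 <= ext x /\ (x \notin Snk -> ext x = 0)) /\
  (forall x, inj x + \sum_(y : vstar) f y x = \sum_(y : vstar) f x y + ext x) /\
  (* vertex capacity: total flow through x is at most 1 *)
  (forall x, inj x + \sum_(y : vstar) f y x <= 1).

Definition flow_value (inj : vstar -> rat) : rat := \sum_(x : vstar) inj x.

Definition maxflow_lt (DL DR B : {set 'I_n * 'I_n}) (Src Snk : {set vstar})
    (k : nat) : Prop :=
  forall f inj ext, is_flow DL DR B Src Snk f inj ext ->
    flow_value inj < k%:R.

End MixedGraph.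

(* Main.v *)
Require Import Defs.
From HB Require Import structures.
From mathcomp Require Import all_boot all_order all_algebra.
From mathcomp Require Import fraction.
From mathcomp Require Import mpoly.
From mathcomp Require Import zify ring lra.

Set Implicit Arguments.
Unset Strict Implicit.
Unset Printing Implicit Defensive.

Import Order.TTheory GRing.Theory Num.Theory.
Local Open Scope ring_scope.

Section MaxFlow.
Variable Y : finType.
Variable c : Y -> Y -> int.
Variables s t : Y.
Hypothesis st : s != t.
Hypothesis c_ge0 : forall u v, 0 <= c u v.

Definition isflow (phi : Y -> Y -> int) :=
  [/\ (forall u v, phi u v = - phi v u), (forall u v, phi u v <= c u v) &
      (forall u, u != s -> u != t -> \sum_v phi u v = 0)].

Definition val (phi : Y -> Y -> int) : int := \sum_v phi s v.

Fixpoint pflow (x : Y) (p : seq Y) (u v : Y) : int :=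
  if p is y :: p' then ((x == u) && (y == v))%:Z - ((x == v) && (y == u))%:Z + pflow y p' u v
  else 0.

Lemma sum_ind1 (a : bool) (y : Y) : \sum_v ((a && (y == v)) : nat)%:Z = (a : nat)%:Z.
Proof.
rewrite (bigD1 y) //= eqxx andbT big1 ?addr0 // => v /negbTE.
by rewrite eq_sym => ->; rewrite andbF.
Qed.

Lemma sum_ind2 (a : bool) (x : Y) : \sum_v (((x == v) && a) : nat)%:Z = (a : nat)%:Z.
Proof.
under eq_bigr do rewrite andbC. exact: sum_ind1.
Qed.

Lemma pflow_sum x p u : \sum_v pflow x p u v = (x == u)%:Z - (last x p == u)%:Z.
Proof.
elim: p x => [|y p IH] x /=; first by rewrite big1 // subrr.
rewrite !big_split /= IH sumrN sum_ind1 sum_ind2. ring.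
Qed.

Lemma pflow_skew x p u v : pflow x p u v = - pflow x p v u.
Proof. elim: p x => [|y p IH] x //=. rewrite IH; ring. Qed.

Lemma pflow_notin x p u v : u \notin x :: p -> pflow x p u v = 0.
Proof.
elim: p x => [|y p IH] x //=. rewrite !inE !negb_or => /and3P[xu yu up].
rewrite IH ?inE ?negb_or ?yu ?up // (eq_sym x u) (negbTE xu) (eq_sym y u) (negbTE yu) /=.
rewrite andbF; lia.
Qed.

Definition res phi := [rel a b | phi a b < c a b].

Lemma pflow_cap phi x p : (forall u v, phi u v <= c u v) ->
  path (res phi) x p -> uniq (x :: p) -> forall u v, phi u v + pflow x p u v <= c u v.
Proof.
move=> cap; elim: p x => [|y p IH] x /=; first by move=> _ _ u v; rewrite addr0.
move=> /andP[rxy pp] /andP[xnot up] u v.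
have xy : x != y by apply: contraNneq xnot => ->; rewrite inE eqxx.
have Hx : forall w, pflow y p x w = 0 /\ pflow y p w x = 0.
  by move=> w; split; [exact: pflow_notin | rewrite pflow_skew pflow_notin ?oppr0].
move: (IH _ pp up u v) (cap u v) rxy (Hx u) (Hx v) (cap y x).
case: (eqVneq x u) => [E1|?]; case: (eqVneq y v) => [E2|?];
  case: (eqVneq x v) => [E3|?]; case: (eqVneq y u) => [E4|?] //=; subst;
  try (by move: xy; rewrite eqxx);
  rewrite ?eqxx ?(negbTE xy) ?(eq_sym y x) ?(negbTE xy) /=; try lia.
Qed.


Lemma augment phi : isflow phi -> connect (res phi) s t ->
  exists phi', isflow phi' /\ val phi' = val phi + 1.
Proof.
case=> sk cap bal /connectP [p0 pp0 lt]; move: lt.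
case: (shortenP pp0) => p pp up _ lt.
exists (fun u v => phi u v + pflow s p u v); split; last first.
  rewrite /val big_split /= pflow_sum -lt eqxx (eq_sym t s) (negbTE st) /=; by rewrite subr0.
split.
- by move=> u v; rewrite sk pflow_skew opprD.
- exact: pflow_cap.
- move=> u us ut; rewrite big_split /= bal // pflow_sum -lt.
  by rewrite (eq_sym s u) (negbTE us) (eq_sym t u) (negbTE ut) /= subrr.
Qed.

Definition cutset phi := [set v | connect (res phi) s v].

Lemma cut phi : isflow phi -> ~~ connect (res phi) s t ->
  (forall u v, u \in cutset phi -> v \notin cutset phi -> phi u v = c u v) /\
  val phi = \sum_(u in cutset phi) \sum_(v in ~: cutset phi) c u v.
Proof.
case=> sk cap bal nst.
set R := cutset phi.
have sat : forall u v, u \in R -> v \notin R -> phi u v = c u v.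
  move=> u v; rewrite !inE => su sv.
  have : ~~ res phi u v.
    by apply: contra sv => ruv; apply: connect_trans su (connect1 ruv).
  rewrite /= -leNgt => h; apply/eqP; rewrite eq_le cap h.
  by [].
split=> //.
have sR : s \in R by rewrite inE connect0.
have e1 : \sum_(u in R) \sum_v phi u v = val phi.
  rewrite (bigD1 s) //= [X in _ + X]big1 ?addr0 // => u /andP[uR us].
  apply: bal => //; apply: contraNneq nst => ut.
  by move: uR; rewrite inE ut.
have e2 : \sum_(u in R) \sum_(v in R) phi u v = 0.
  have : \sum_(u in R) \sum_(v in R) phi u v = - \sum_(u in R) \sum_(v in R) phi u v.
    rewrite {1}exchange_big /= -sumrN; apply: eq_bigr => u _.
    rewrite -sumrN; apply: eq_bigr => v _; exact: sk.
  lia.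
rewrite -e1.
transitivity (\sum_(u in R) \sum_(v in ~: R) phi u v); last first.
  apply: eq_bigr => u uR; apply: eq_bigr => v; rewrite inE => vR; exact: sat.
have -> : \sum_(u in R) \sum_(v in ~: R) phi u v =
  \sum_(u in R) \sum_v phi u v - \sum_(u in R) \sum_(v in R) phi u v.
  rewrite -sumrB; apply: eq_bigr => u _.
  rewrite [in RHS](bigID (fun v => v \in R)) /=.
  have -> : \sum_(v in ~: R) phi u v = \sum_(v | v \notin R) phi u v.
    by apply: eq_bigl => v; rewrite inE.
  ring.
by rewrite e2 subr0.
Qed.

Lemma val_bound phi : isflow phi -> val phi <= \sum_v c s v.
Proof. by case=> _ cap _; apply: ler_sum => v _. Qed.

Lemma maxflow_mincut : exists phi, isflow phi /\
  exists R : {set Y}, [/\ s \in R, t \notin R,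
    (forall u v, u \in R -> v \notin R -> phi u v = c u v) &
    val phi = \sum_(u in R) \sum_(v in ~: R) c u v].
Proof.
pose Vm := \sum_v c s v.
suff H : forall m : nat, forall phi, isflow phi -> Vm - val phi <= m%:Z ->
  exists phi, isflow phi /\
  exists R : {set Y}, [/\ s \in R, t \notin R,
    (forall u v, u \in R -> v \notin R -> phi u v = c u v) &
    val phi = \sum_(u in R) \sum_(v in ~: R) c u v].
  have f0 : isflow (fun _ _ => 0).
    split=> [u v|u v|u _ _]; [by rewrite oppr0 | exact: c_ge0 | by rewrite big1].
  apply: (H (absz (Vm - val (fun _ _ => 0)))) f0 _.
  by rewrite abszE ler_norm.
elim=> [|m IH] phi fphi hm.
  have [cst|ncst] := boolP (connect (res phi) s t).
    have [phi' [f' v']] := augment fphi cst.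
    have := val_bound f'; rewrite -/Vm; lia.
  have [sat e] := cut fphi ncst.
  exists phi; split=> //; exists (cutset phi); split=> //.
    by rewrite inE connect0.
  by rewrite inE.
have [cst|ncst] := boolP (connect (res phi) s t).
  have [phi' [f' v']] := augment fphi cst.
  apply: (IH phi' f'); lia.
have [sat e] := cut fphi ncst.
exists phi; split=> //; exists (cutset phi); split=> //.
  by rewrite inE connect0.
by rewrite inE.
Qed.

End MaxFlow.

Definition flowP (X : finType) (e : rel X) (Src Snk : {set X})
    (f : X -> X -> rat) (inj ext : X -> rat) : Prop :=
  (forall x y, 0 <= f x y) /\
  (forall x y, f x y <= 1) /\
  (forall x y, ~~ e x y -> f x y = 0) /\
  (forall x, 0 <= inj x /\ (x \notin Src -> inj x = 0)) /\
  (forall x, 0 <= ext x /\ (x \notin Snk -> ext x = 0)) /\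
  (forall x, inj x + \sum_(y : X) f y x = \sum_(y : X) f x y + ext x) /\
  (forall x, inj x + \sum_(y : X) f y x <= 1).

Section Menger.
Variable X : finType.
Variable e : rel X.
Hypothesis irr : forall x, ~~ e x x.
Variables A Z : {set X}.
Variable k : nat.
Hypothesis hmax : forall f inj ext, flowP e A Z f inj ext -> \sum_x inj x < k%:R.

Definition Yt := ((X * bool) + bool)%type.

Definition cap (u v : Yt) : int :=
  match u, v with
  | inl (x, false), inl (y, true) => (x == y)%:Z
  | inl (x, true), inl (y, false) => (e x y)%:Z * k%:Z
  | inr false, inl (y, false) => (y \in A)%:Z * k%:Z
  | inl (x, true), inr true => (x \in Z)%:Z * k%:Z
  | _, _ => 0
  end.

Lemma cap_ge0 u v : 0 <= cap u v.
Proof. by case: u v => [[x [|]]|[|]] [[y [|]]|[|]] //=. Qed.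

Lemma sumY (G : Yt -> int) :
  \sum_v G v = \sum_x (G (inl (x, true)) + G (inl (x, false))) + (G (inr true) + G (inr false)).
Proof.
rewrite big_sumType /= big_bool; congr (_ + _).
transitivity (\sum_x \sum_b G (inl (x, b))); last by apply: eq_bigr => x _; rewrite big_bool.
by rewrite pair_bigA; apply: eq_bigr => -[x b].
Qed.

Lemma sum_eqy (y : X) (a : int) : \sum_x ((x == y)%:Z * a) = a.
Proof.
rewrite (bigD1 y) //= eqxx mul1r big1 ?addr0 // => x /negbTE ->; by rewrite mul0r.
Qed.

Definition fiD (phi : Yt -> Yt -> int) x y :=
  if e x y then phi (inl (x, true)) (inl (y, false)) else 0.
Definition injiD (phi : Yt -> Yt -> int) x := phi (inr false) (inl (x, false)).
Definition extiD (phi : Yt -> Yt -> int) x := phi (inl (x, true)) (inr true).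
Definition thrD (phi : Yt -> Yt -> int) x := phi (inl (x, false)) (inl (x, true)).

Lemma menger : exists C : {set X}, (#|C| < k)%N /\
  forall a z, a \in A -> z \in Z -> z \notin C ->
    ~~ connect [rel u v | e u v && (u \notin C)] a z.
Proof.
have st : (inr false : Yt) != inr true by [].
have [phi [[sk cp bal] [R [sR tR sat ecut]]]] := maxflow_mincut st cap_ge0.
have zero : forall u v, cap u v = 0 -> cap v u = 0 -> phi u v = 0.
  move=> u v h1 h2; have := cp u v; have := cp v u; rewrite sk h1 h2; lia.
have lowb : forall u v, - cap v u <= phi u v.
  by move=> u v; rewrite sk lerN2 cp.
have fi0 : forall x, fiD phi x x = 0 by move=> x; rewrite /fiD (negbTE (irr x)).
have bal_in : forall y, injiD phi y + \sum_x fiD phi x y = thrD phi y.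
  move=> y; have := bal (inl (y, false)) isT isT; rewrite sumY.
  have -> : \sum_x (phi (inl (y, false)) (inl (x, true)) + phi (inl (y, false)) (inl (x, false)))
      = \sum_x ((x == y)%:Z * thrD phi y - fiD phi x y).
    apply: eq_bigr => x _; rewrite [phi _ (inl (x, false))]zero // addr0.
    rewrite /fiD; case: ifP => exy.
      have xy : (x == y) = false by apply: contraTF exy => /eqP ->; exact: irr.
      by rewrite xy mul0r sub0r [LHS]sk.
    case: (eqVneq x y) => [->|xy]; first by rewrite mul1r subr0.
    by rewrite mul0r subr0 zero //= ?exy ?(negbTE xy) ?(eq_sym y x) ?(negbTE xy).
  rewrite sumrB sum_eqy (zero _ (inr true)) // add0r [phi _ (inr false)]sk.
  rewrite -/(injiD phi y) => /eqP; rewrite subr_eq0 subr_eq => /eqP ->.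
  by rewrite addrC.
have bal_out : forall y, \sum_x fiD phi y x + extiD phi y = thrD phi y.
  move=> y; have := bal (inl (y, true)) isT isT; rewrite sumY.
  have -> : \sum_x (phi (inl (y, true)) (inl (x, true)) + phi (inl (y, true)) (inl (x, false)))
      = \sum_x (fiD phi y x - (x == y)%:Z * thrD phi y).
    apply: eq_bigr => x _; rewrite [phi _ (inl (x, true))]zero // add0r.
    rewrite /fiD; case: ifP => exy.
      have xy : (x == y) = false by apply: contraTF exy => /eqP ->; exact: irr.
      by rewrite xy mul0r subr0.
    case: (eqVneq x y) => [->|xy]; first by rewrite mul1r sub0r [LHS]sk.
    by rewrite mul0r subr0 zero //= ?exy ?(negbTE xy) ?(eq_sym y x) ?(negbTE xy).
  rewrite sumrB sum_eqy (zero (inl (y, true)) (inr false)) // addr0.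
  by rewrite -/(extiD phi y) addrAC => /eqP; rewrite subr_eq0 => /eqP.
have fi_ge0 : forall x y, 0 <= fiD phi x y.
  move=> x y; rewrite /fiD; case: ifP => // exy.
  have := lowb (inl (x, true)) (inl (y, false)); rewrite /=.
  have -> : (y == x) = false by apply: contraTF exy => /eqP ->; exact: irr.
  by [].
have inj_ge0 : forall x, 0 <= injiD phi x.
  by move=> x; have := lowb (inr false) (inl (x, false)).
have ext_ge0 : forall x, 0 <= extiD phi x.
  by move=> x; have := lowb (inl (x, true)) (inr true).
have thr_le1 : forall x, thrD phi x <= 1.
  by move=> x; have := cp (inl (x, false)) (inl (x, true)); rewrite /= eqxx.
have sum_fi_ge0 : forall y, 0 <= \sum_x fiD phi x y.
  by move=> y; apply: sumr_ge0 => x _.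
have fi_le1 : forall x y, fiD phi x y <= 1.
  move=> x y; have h := bal_in y; rewrite (bigD1 x) //= in h.
  move: h; set S' := (X in _ + (_ + X) = _) => h.
  have Hs : 0 <= S' by apply: sumr_ge0.
  move: h Hs (thr_le1 y) (inj_ge0 y); clearbody S'; lia.
have valE : val (inr false) phi = \sum_x injiD phi x.
  rewrite /val sumY (zero (inr false) (inr true)) // (zero (inr false) (inr false)) //.
  by rewrite !addr0; apply: eq_bigr => x _; rewrite zero // add0r.
have vlt : val (inr false) phi < k%:Z.
  have := hmax (f := fun x y => (fiD phi x y)%:~R) (inj := fun x => (injiD phi x)%:~R)
    (ext := fun x => (extiD phi x)%:~R).
  rewrite -rmorph_sum -valE.
  change (k%:R : rat) with ((k%:Z)%:~R : rat); rewrite ltr_int; apply.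
  split; first by move=> x y; rewrite ler0z.
  split; first by move=> x y; rewrite -[1]/((1%:Z)%:~R) ler_int.
  split; first by move=> x y exy; rewrite /fiD (negbTE exy).
  split.
    move=> x; split; first by rewrite ler0z.
    by move=> xA; rewrite /injiD zero //= (negbTE xA).
  split.
    move=> x; split; first by rewrite ler0z.
    by move=> xZ; rewrite /extiD zero //= (negbTE xZ).
  split.
    by move=> x; rewrite -!rmorph_sum -!intrD bal_in bal_out.
  by move=> x; rewrite -!rmorph_sum -intrD bal_in -[1]/((1%:Z)%:~R) ler_int.
have cap0 := cap_ge0.
have cross : forall u v, u \in R -> v \notin R -> cap u v < k%:Z.
  move=> u v uR vR.
  have h1 : cap u v <= \sum_(v' in ~: R) cap u v'.
    by rewrite (bigD1 v) ?inE //= lerDl; apply: sumr_ge0 => ? _.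
  have h2 : \sum_(v' in ~: R) cap u v' <= \sum_(u' in R) \sum_(v' in ~: R) cap u' v'.
    by rewrite [leRHS](bigD1 u) //= lerDl; apply: sumr_ge0 => ? _; apply: sumr_ge0 => ? _.
  rewrite -ecut in h2.
  exact: (le_lt_trans h1 (le_lt_trans h2 vlt)).
pose C := [set x | (inl (x, false) \in R) && (inl (x, true) \notin R)].
exists C; split.
  suff : (#|C|%:Z) <= val (inr false) phi by move: vlt; lia.
  rewrite ecut.
  pose g u := \sum_(v in ~: R) cap u v.
  have g0 : forall u, 0 <= g u by move=> u; apply: sumr_ge0.
  have step1 : #|C|%:Z = \sum_(x in C) cap (inl (x, false)) (inl (x, true)).
    rewrite (eq_bigr (fun _ => 1)); last by move=> x _; rewrite /= eqxx.
    by rewrite sumr_const natz.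
  have step2 : \sum_(x in C) cap (inl (x, false)) (inl (x, true)) <=
      \sum_(x in C) g (inl (x, false)).
    apply: ler_sum => x; rewrite inE => /andP[_ xo].
    rewrite /g (bigD1 (inl (x, true))); last by rewrite inE.
    by rewrite lerDl; apply: sumr_ge0 => ? _.
  have step3 : \sum_(x in C) g (inl (x, false)) =
      \sum_(u in [set (inl (x, false) : Yt) | x in C]) g u.
    by rewrite big_imset // => x y _ _ [].
  have step4 : \sum_(u in [set (inl (x, false) : Yt) | x in C]) g u <= \sum_(u in R) g u.
    rewrite [leRHS](bigID (fun u => u \in [set (inl (x, false) : Yt) | x in C])) /=.
    have -> : \sum_(i in R | i \in [set (inl (x, false) : Yt) | x in C]) g i =
        \sum_(u in [set (inl (x, false) : Yt) | x in C]) g u.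
      apply: eq_bigl => u; case: (boolP (u \in [set (inl (x, false) : Yt) | x in C])) => [uI|]; last by rewrite andbF.
      rewrite andbT; case/imsetP: uI => x xC ->.
      by move: xC; rewrite inE => /andP[-> _].
    by rewrite lerDl; apply: sumr_ge0 => ? _.
  rewrite step1; apply: (le_trans step2); rewrite step3; exact: step4.
move=> a z aA zZ zC; apply/negP => /connectP [p pp lz].
have sigR : (inr false : Yt) \in R by [].
have Q0 : (inl (a, false) : Yt) \in R.
  case: (boolP (_ \in R)) => // aR; have := cross _ _ sigR aR.
  by rewrite /= aA mul1r ltxx.
have step : forall x y, (inl (x, false) : Yt) \in R -> e x y -> x \notin C ->
    (inl (y, false) : Yt) \in R.
  move=> x y xR exy xC.
  have xo : (inl (x, true) : Yt) \in R by move: xC; rewrite inE xR /= negbK.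
  case: (boolP (_ \in R)) => // yR; have := cross _ _ xo yR.
  by rewrite /= exy mul1r ltxx.
have Qz : (inl (z, false) : Yt) \in R.
  rewrite lz; elim: p a pp Q0 {aA lz} => [|y p IH] x //= /andP[/andP[exy xC] pp] xR.
  by apply: IH pp _; apply: step exy xC.
have zo : (inl (z, true) : Yt) \in R by move: zC; rewrite inE Qz /= negbK.
have := cross _ (inr true) zo tR.
by rewrite /= zZ mul1r ltxx.
Qed.

End Menger.

Section Core.
Variable F : fieldType.
Variable N : nat.
Implicit Types A B : {set 'I_N}.

Definition Ed A : 'M[F]_N := diag_mx (\row_i ((i \in A)%:R)).

Lemma EdM A (M : 'M[F]_N) : Ed A *m M = \matrix_(i, j) ((i \in A)%:R * M i j).
Proof. by rewrite mul_diag_mx; apply/matrixP => i j; rewrite !mxE. Qed.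

Lemma MEd A (M : 'M[F]_N) : M *m Ed A = \matrix_(i, j) (M i j * (j \in A)%:R).
Proof. by rewrite mul_mx_diag; apply/matrixP => i j; rewrite !mxE. Qed.

Lemma EdC A : Ed A + Ed (~: A) = 1%:M.
Proof.
apply/matrixP => i j; rewrite !mxE inE.
by case: (i \in A); case: (i == j); rewrite /= ?mulr1n ?mulr0n ?addr0 ?add0r.
Qed.

Lemma EdT : Ed setT = 1%:M.
Proof. by apply/matrixP => i j; rewrite !mxE inE. Qed.

Lemma Ed_orth A : Ed A *m Ed (~: A) = 0.
Proof.
by apply/matrixP => i j; rewrite EdM !mxE inE; case: (i \in A); case: (i == j);
  rewrite /= ?mulr1n ?mulr0n ?mul0r ?mulr0.
Qed.

Definition sel A : 'M[F]_(#|A|, N) := \matrix_(i, j) ((enum_val i == j)%:R).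

Lemma selE A : (sel A)^T *m sel A = Ed A.
Proof.
apply/matrixP => a b; rewrite !mxE.
have [aA|aA] := boolP (a \in A).
  rewrite (bigD1 (enum_rank_in aA a)) //= !mxE enum_rankK_in // eqxx mul1r.
  rewrite big1 ?addr0; last first.
    move=> i /negbTE ni; rewrite !mxE.
    have -> : (enum_val i == a) = false.
      apply/negbTE; apply: contraFN ni => /eqP ea; apply/eqP.
      by apply: enum_val_inj; rewrite ea enum_rankK_in.
    by rewrite mul0r.
  by [].
rewrite big1 ?mul0rn // => i _; rewrite !mxE.
have -> : (enum_val i == a) = false.
  by apply/negbTE; apply: contraNneq aA => <-; exact: enum_valP.
by rewrite mul0r.
Qed.

Lemma core (Wm P : 'M[F]_N) (Cs Rs : {set 'I_N}) m (rho gam : 'I_m -> 'I_N) :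
  (1%:M - Wm) *m P = 1%:M ->
  (forall A B, (1%:M - Ed A *m Wm *m Ed B) \in unitmx) ->
  (forall u v, u \in Rs -> u \notin Cs -> v \notin Rs -> Wm u v = 0) ->
  (forall i, rho i \in Rs) -> (forall j, (gam j \in Cs) || (gam j \notin Rs)) ->
  (\rank (mxsub rho gam P) <= #|Cs|)%N.
Proof.
move=> hP hinv clos hrho hgam.
set W1 := Ed (~: Cs) *m Wm.
have hF : (1%:M - W1) \in unitmx by have := hinv (~: Cs) setT; rewrite EdT mulmx1.
set Fm := invmx (1%:M - W1).
have FW : Fm *m (1%:M - W1) = 1%:M by exact: mulVmx.
have PW : P *m (1%:M - Wm) = 1%:M by exact: mulmx1C.
have decomp : P = Fm *m Ed (~: Cs) + Fm *m Ed Cs *m P.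
  set X := _ + _.
  have XW : X *m (1%:M - Wm) = 1%:M.
    rewrite /X mulmxDl -!mulmxA PW mulmx1 -mulmxDr.
    rewrite mulmxBr mulmx1 -/W1 addrAC -[Ed (~: Cs) + _]addrC EdC.
    exact: FW.
  by rewrite -[X]mulmx1 -hP mulmxA XW mul1mx.
set G := invmx (1%:M - W1 *m Ed Rs).
have hG : (1%:M - W1 *m Ed Rs) \in unitmx by have := hinv (~: Cs) Rs.
have GW : G *m (1%:M - W1 *m Ed Rs) = 1%:M by exact: mulVmx.
have GE : G *m Ed (~: Rs) = Ed (~: Rs).
  have h : (1%:M - W1 *m Ed Rs) *m Ed (~: Rs) = Ed (~: Rs).
    by rewrite mulmxBl mul1mx -mulmxA Ed_orth mulmx0 subr0.
  by rewrite -{1}h mulmxA GW mul1mx.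
have clos' : Ed Rs *m W1 *m Ed (~: Rs) = 0.
  apply/matrixP => i j; rewrite MEd EdM /W1 EdM !mxE !inE.
  have [iR|iR] := boolP (i \in Rs); last by rewrite /= ?(mulr0n, mulr1n, mul0r, mulr0, mul1r, mulr1).
  have [iC|iC] := boolP (i \in Cs); first by rewrite /= ?(mulr0n, mulr1n, mul0r, mulr0, mul1r, mulr1).
  have [jR|jR] := boolP (j \in Rs); first by rewrite /= ?(mulr0n, mulr1n, mul0r, mulr0, mul1r, mulr1).
  by rewrite clos // /= ?(mulr0n, mulr1n, mul0r, mulr0, mul1r, mulr1).
have key : Ed Rs *m Fm = Ed Rs *m G.
  have h : Ed Rs *m G *m (1%:M - W1) = Ed Rs.
    have e1 : 1%:M - W1 = (1%:M - W1 *m Ed Rs) - W1 *m Ed (~: Rs).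
      by rewrite -{1}[W1]mulmx1 -(EdC Rs) mulmxDr opprD addrA.
    rewrite e1 mulmxBr -mulmxA GW mulmx1.
    suff -> : Ed Rs *m G *m (W1 *m Ed (~: Rs)) = 0 by rewrite subr0.
    rewrite -[G]mulmx1 -(EdC Rs) mulmxDr mulmxDr mulmxDl.
    have t1 : Ed Rs *m (G *m Ed Rs) *m (W1 *m Ed (~: Rs)) =
        Ed Rs *m G *m (Ed Rs *m W1 *m Ed (~: Rs)) by rewrite !mulmxA.
    by rewrite t1 clos' mulmx0 add0r GE Ed_orth mul0mx.
  by rewrite -{1}h -mulmxA mulmxV // mulmx1.
have zeroR : Ed Rs *m Fm *m Ed (~: Rs) = 0 by rewrite key -mulmxA GE Ed_orth.
have e2 : mxsub rho gam P = mxsub rho gam (Ed Rs *m Fm *m Ed Cs *m P).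
  have d2 : Ed Rs *m P = Ed Rs *m Fm *m Ed (~: Cs) + Ed Rs *m Fm *m Ed Cs *m P.
    by rewrite {1}decomp mulmxDr !mulmxA.
  apply/matrixP => i j; rewrite [LHS]mxE [RHS]mxE.
  have -> : P (rho i) (gam j) = (Ed Rs *m P) (rho i) (gam j).
    by rewrite EdM mxE hrho mul1r.
  rewrite d2 mxE.
  suff -> : (Ed Rs *m Fm *m Ed (~: Cs)) (rho i) (gam j) = 0 by rewrite add0r.
  rewrite MEd mxE inE.
  have := hgam j; case: (boolP (gam j \in Cs)) => [_ _|_ /= gR].
    by rewrite /= mulr0.
  have -> : (Ed Rs *m Fm) (rho i) (gam j) = (Ed Rs *m Fm *m Ed (~: Rs)) (rho i) (gam j).
    by rewrite [Ed Rs *m Fm *m Ed (~: Rs)]MEd mxE inE gR mulr1.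
  by rewrite zeroR mxE mul0r.
rewrite e2 mxsub_mul -(selE Cs) mulmxA -mul_rowsub_mx.
apply: leq_trans (mxrankM_maxl _ _) _.
apply: leq_trans (mxrankM_maxr _ _) _.
exact: rank_leq_row.
Qed.

End Core.

Section Concrete.
Variable n : nat.

Local Notation tf := (@FracField.tofrac (polyring n)).
Definition ev : polyring n -> int := meval (fun _ => 0).

Lemma det_unit m (M : 'M[polyring n]_m) :
  map_mx ev M = 0 -> (1%:M - map_mx tf M) \in unitmx.
Proof.
move=> hM; rewrite unitmxE unitfE -(map_mx1 tf) -map_mxB det_map_mx tofrac_eq0.
apply/eqP => h; have := congr1 (@meval _ int (fun _ => 0)) h.
rewrite -det_map_mx map_mxB map_mx1 hM subr0 det1 meval0 => /eqP.
by rewrite oner_eq0.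
Qed.



End Concrete.

Section Concrete2.
Variable n : nat.
Local Notation tf := (@FracField.tofrac (polyring n)).

Definition LamP (E : {set 'I_n * 'I_n}) : 'M[polyring n]_n :=
  \matrix_(u, v) (if (u, v) \in E then 'X_(enum_rank (inl (u, v) : var_t n)) else 0).
Definition OmP (B : {set 'I_n * 'I_n}) : 'M[polyring n]_n :=
  \matrix_(u, v) (if (u == v) || ((u, v) \in B) then
     'X_(enum_rank (inr (if (u <= v)%N then (u, v) else (v, u)) : var_t n)) else 0).

Lemma LamPE E : LambdaOn E = map_mx tf (LamP E).
Proof. by apply/matrixP => u v; rewrite !mxE; case: ifP => _ //; rewrite rmorph0. Qed.

Lemma OmPE B : Omega B = map_mx tf (OmP B).
Proof. by apply/matrixP => u v; rewrite !mxE; case: ifP => _ //; rewrite rmorph0. Qed.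

Lemma ev_LamP E : map_mx (@ev n) (LamP E) = 0.
Proof. by apply/matrixP => u v; rewrite !mxE; case: ifP => _; rewrite /ev ?mevalXU ?meval0. Qed.

Lemma ev_OmP B : map_mx (@ev n) (OmP B) = 0.
Proof. by apply/matrixP => u v; rewrite !mxE; case: ifP => _; rewrite /ev ?mevalXU ?meval0. Qed.

Definition WP DL DR B : 'M[polyring n]_(n + n) :=
  block_mx (LamP DL)^T (OmP B) 0 (LamP DR).

Lemma ev_WP DL DR B : map_mx (@ev n) (WP DL DR B) = 0.
Proof. by rewrite /WP map_block_mx -map_trmx !ev_LamP ev_OmP map_mx0 trmx0 block_mx0. Qed.

Lemma WPE DL DR B : map_mx tf (WP DL DR B) =
  block_mx (LambdaOn DL)^T (Omega B) 0 (LambdaOn DR).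
Proof. by rewrite /WP map_block_mx -map_trmx -!LamPE -OmPE map_mx0. Qed.

Lemma WP_edge DL DR B a b : ~~ flow_edge DL DR B a b ->
  WP DL DR B (unsplit a) (unsplit b) = 0.
Proof.
case: a => i; case: b => j /= nf;
  rewrite /WP ?block_mxEul ?block_mxEur ?block_mxEdl ?block_mxEdr !mxE ?(negbTE nf) //.
Qed.

Definition EdP N (A : {set 'I_N}) : 'M[polyring n]_N := diag_mx (\row_i ((i \in A)%:R)).

Lemma mapEdP N (A : {set 'I_N}) : map_mx tf (EdP A) = Ed (ratfun n) A.
Proof. rewrite map_diag_mx; congr diag_mx; apply/matrixP => i j; by rewrite !mxE rmorph_nat. Qed.

Lemma ev_EdP N (A : {set 'I_N}) (M : 'M[polyring n]_N) B : map_mx (@ev n) M = 0 ->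
  map_mx (@ev n) (EdP A *m M *m EdP B) = 0.
Proof.
move=> h; have -> : map_mx (@ev n) (EdP A *m M *m EdP B) =
  map_mx (meval (fun _ => 0)) (EdP A) *m map_mx (meval (fun _ => 0)) M *m
  map_mx (meval (fun _ => 0)) (EdP B) by rewrite !map_mxM.
by rewrite -[map_mx (meval _) M]/(map_mx (@ev n) M) h mulmx0 mul0mx.
Qed.

End Concrete2.

Lemma block_inv (R : comNzRingType) m (L Om Rr Ai Ci : 'M[R]_m) :
  Ai *m (1%:M - L) = 1%:M -> (1%:M - Rr) *m Ci = 1%:M ->
  (1%:M - block_mx L^T Om 0 Rr) *m block_mx Ai^T (Ai^T *m Om *m Ci) 0 Ci = 1%:M.
Proof.
move=> hA hC.
rewrite (scalar_mx_block m m 1) opp_block_mx add_block_mx mulmx_block.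
have tL : 1%:M - L^T = (1%:M - L)^T by rewrite linearB /= trmx1.
have k1 : (1%:M - L)^T *m Ai^T = 1%:M by rewrite -trmx_mul hA trmx1.
rewrite tL mulmx0 addr0 k1 !mulmxA k1 mul1mx sub0r mulNmx subrr.
rewrite subrr !mul0mx mulmx0 addr0 add0r hC.
by rewrite -scalar_mx_block.
Qed.

Unset Implicit Arguments.

Theorem lemma3p7 (n : nat) (D B DL DR : {set 'I_n * 'I_n})
  (hDloop : forall u, (u, u) \notin D)
  (hBloop : forall u, (u, u) \notin B)
  (hBsym : forall u v, ((u, v) \in B) = ((v, u) \in B))
  (hDL : DL \subset D) (hDR : DR \subset D)
  (S T : {set 'I_n}) (hST : #|T| = #|S|) :
  maxflow_lt DL DR B [set inl i | i in S] [set inr t | t in T] #|S| ->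
  minor (Gamma DL DR B) hST = 0.
Proof.
move=> hmax.
set Src : {set vstar n} := [set inl i | i in S].
set Snk : {set vstar n} := [set inr t | t in T].
have irr : forall x, ~~ flow_edge DL DR B x x.
  case=> i /=.
    by apply: contra (hDloop i); apply: (subsetP hDL).
  by apply: contra (hDloop i); apply: (subsetP hDR).
have [C [hC sep]] := @menger (vstar n) (flow_edge DL DR B) irr Src Snk #|S|
  (fun f inj ext h => hmax f inj ext h).
pose e' := [rel u v | flow_edge DL DR B u v && (u \notin C)].
pose Cs : {set 'I_(n + n)} := unsplit @: C.
pose Rs : {set 'I_(n + n)} := [set i | [exists a in Src, connect e' a (split i)]].
have memCs : forall i, (i \in Cs) = (split i \in C).
  move=> i; apply/idP/idP => [/imsetP [x xC ->]|h]; first by rewrite unsplitK.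
  by rewrite -[i]splitK imset_f.
have uL : (1%:M - LambdaOn DL) \in unitmx by rewrite LamPE; apply: det_unit; exact: ev_LamP.
have uR : (1%:M - LambdaOn DR) \in unitmx by rewrite LamPE; apply: det_unit; exact: ev_LamP.
pose Q := block_mx (invmx (1%:M - LambdaOn DL))^T (Gamma DL DR B) 0 (invmx (1%:M - LambdaOn DR)).
pose W := map_mx (@FracField.tofrac (polyring n)) (WP DL DR B).
have hQ : (1%:M - W) *m Q = 1%:M.
  rewrite /W WPE /Q.
  exact: (block_inv (Omega B) (mulVmx uL) (mulmxV uR)).
have hinv : forall A B0 : {set 'I_(n + n)},
    (1%:M - Ed (ratfun n) A *m W *m Ed (ratfun n) B0) \in unitmx.
  move=> A B0; rewrite -!mapEdP /W -!map_mxM; apply: det_unit.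
  by apply: ev_EdP; exact: ev_WP.
have clos : forall u v, u \in Rs -> u \notin Cs -> v \notin Rs -> W u v = 0.
  move=> u v; rewrite !inE memCs => /existsP [a /andP [aS cu]] uC vR.
  have [fe|nfe] := boolP (flow_edge DL DR B (split u) (split v)).
    exfalso; move/negP: vR; apply; apply/existsP; exists a; rewrite aS /=.
    apply: connect_trans cu (connect1 _); by rewrite /= fe uC.
  by rewrite /W mxE -[u]splitK -[v]splitK WP_edge // rmorph0.
suff main : forall f g : 'I_#|S| -> 'I_n, (forall i, f i \in S) -> (forall j, g j \in T) ->
    \det (mxsub f g (Gamma DL DR B)) = 0.
  rewrite /minor castmxEsub -mxsub_comp; apply: main => i /=; exact: enum_valP.
move=> f g hf hg.
have splitL : forall t : 'I_n, split (lshift n t) = inl t := fun t => unsplitK (inl t).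
have splitR : forall t : 'I_n, split (rshift n t) = inr t := fun t => unsplitK (inr t).
pose rho := fun i => lshift n (f i).
pose gam := fun j => rshift n (g j).
have -> : mxsub f g (Gamma DL DR B) = mxsub rho gam Q.
  by apply/matrixP => i j; rewrite [LHS]mxE [RHS]mxE /rho /gam /Q block_mxEur.
have hrho : forall i, rho i \in Rs.
  move=> i; rewrite inE; apply/existsP; exists (inl (f i)).
  rewrite imset_f //= /rho.
  by rewrite splitL connect0.
have hgam : forall j, (gam j \in Cs) || (gam j \notin Rs).
  move=> j; rewrite memCs /gam splitR.
  case: (boolP (inr (g j) \in C)) => //= nC.
  rewrite inE; apply/negP => /existsP [a /andP [aS ca]].
  move: ca; rewrite splitR => ca.
  by have := sep a (inr (g j)) aS (imset_f _ (hg j)) nC; move/negP; apply.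
have hrk := core hQ hinv clos hrho hgam.
have hr : (\rank (mxsub rho gam Q) < #|S|)%N.
  apply: leq_ltn_trans hrk _; rewrite card_imset //; exact: can_inj unsplitK.
apply/eqP; apply: contraTT hr => hd; rewrite -leqNgt mxrank_unit ?leqnn //.
Qed.
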